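(* Let $G=K_n$ with $n\ge2$, and let $L$ be a list-assignment with $|L(v)|\ge\deg(v)+1=n$ for all $v\in V(G)$. If $\left|\bigcup_{v\in V(G)}L(v)\right|=n$, then all lists are identical and every $L$-colouring of $G$ is frozen. Otherwise, $\alpha\sim\beta$ for all $L$-colourings $\alpha,\beta$, and in fact $\mathrm{dist}_{\mathcal{C}(G,L)}(\alpha,\beta)\le 3n/2+2$.
   Context: An $L$-colouring is a proper colouring $\varphi$ with $\varphi(v)\in L(v)$ for all $v$. A vertex $v$ is frozen under $\varphi$ if every colour of $L(v)\setminus\{\varphi(v)\}$ appears on a neighbour of $v$; a colouring is frozen if all its vertices are frozen. $\mathcal{C}(G,L)$ is the graph whose vertices are the $L$-colourings, adjacent when they differ by a single-vertex recolouring (keeping the colouring a proper $L$-colouring); $\alpha\sim\beta$ means $\alpha$ and $\beta$ lie in the same component of $\mathcal{C}(G,L)$, and $\mathrm{dist}_{\mathcal{C}(G,L)}$ is the graph distance. *)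

(* Defs.v *)
From mathcomp Require Import all_boot.
Set Implicit Arguments. Unset Strict Implicit. Unset Printing Implicit Defensive.

(* A simple graph on a finType T is given by an adjacency relation [adj]
   (intended symmetric and irreflexive). *)

Definition complete_adj (n : nat) : rel 'I_n := fun u v => u != v.

Section Colourings.
Variables (T C : finType) (adj : rel T) (L : T -> {set C}).

Definition is_Lcolouring (phi : {ffun T -> C}) : Prop :=
  (forall v, phi v \in L v) /\ (forall u v, adj u v -> phi u != phi v).

Definition frozen_vertex (phi : {ffun T -> C}) (v : T) : Prop :=
  forall c, c \in L v :\ phi v -> exists2 u, adj v u & phi u = c.

Definition frozen (phi : {ffun T -> C}) : Prop := forall v, frozen_vertex phi v.

Definition recol_step (a b : {ffun T -> C}) : Prop :=
  [/\ is_Lcolouring a, is_Lcolouring b, a != b &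
      exists v, forall u, u != v -> a u = b u].

Fixpoint recol_walk (k : nat) (a b : {ffun T -> C}) : Prop :=
  match k with
  | 0 => a = b
  | k'.+1 => exists c, recol_step a c /\ recol_walk k' c b
  end.

Definition recol_equiv (a b : {ffun T -> C}) : Prop := exists k, recol_walk k a b.

Definition recol_dist_le (a b : {ffun T -> C}) (d : nat) : Prop :=
  exists2 k, k <= d & recol_walk k a b.

End Colourings.

(* Main.v *)
Require Import Defs.
From mathcomp Require Import all_boot zify.
Set Implicit Arguments. Unset Strict Implicit. Unset Printing Implicit Defensive.

Lemma ar1 a a' u u' m : a' < a -> u' <= u -> 2*a+u <= m.+1 -> 2*a'+u' <= m.
Proof. lia. Qed.
Lemma ar2 a a' u u' m : a' < a -> u'+2 <= u -> 2*a+u <= m.+1 -> 2*a'+u' <= m.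
Proof. lia. Qed.
Lemma ar3e e k a a' u u' : 2*k <= 2*a'+u'+e -> a' < a -> u' <= u -> 2*k.+1 <= 2*a+u+e.
Proof. lia. Qed.
Lemma ar4e e k a a' u u' : 2*k <= 2*a'+u'+e -> a' < a -> u'+2 <= u -> 2*k.+2 <= 2*a+u+e.
Proof. lia. Qed.
Lemma ar5 k a a' u u' : 2*k <= 2*a'+u'+2 -> a' <= a -> u' <= u -> 2*(1+k) <= 2*a+u+4.
Proof. lia. Qed.
Lemma ar6 a u n : a <= n -> u <= n -> 2*a+u+4 <= 3*n+4.
Proof. lia. Qed.
Lemma ar3 k a a' u u' : 2*k <= 2*a'+u'+2 -> a' < a -> u' <= u -> 2*k.+1 <= 2*a+u+2.
Proof. lia. Qed.
Lemma ar4 k a a' u u' : 2*k <= 2*a'+u'+2 -> a' < a -> u'+2 <= u -> 2*k.+2 <= 2*a+u+2.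
Proof. lia. Qed.

Section Aux.
Variables (C : finType) (n : nat) (L : 'I_n -> {set C}).
Local Notation T := 'I_n.
Local Notation col := {ffun 'I_n -> C}.
Local Notation proper := (is_Lcolouring (@complete_adj n) L).
Local Notation step := (recol_step (@complete_adj n) L).
Local Notation walk := (recol_walk (@complete_adj n) L).

Definition upd (g : col) (v : T) (c : C) : col := [ffun x => if x == v then c else g x].
Definition im (g : col) : {set C} := [set g u | u in [set: T]].

Lemma updE g v c x : upd g v c x = if x == v then c else g x.
Proof. by rewrite ffunE. Qed.

Lemma proper_inj g : proper g -> injective g.
Proof.
case=> _ H u v E; case: (eqVneq u v) => // uv.
by move: (H u v uv); rewrite E eqxx.
Qed.

Lemma imP (g : col) (c : C) : reflect (exists u, c = g u) (c \in im g).
Proof.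
apply: (iffP imsetP) => [[u _ ->]|[u ->]]; first by exists u.
by exists u; rewrite ?inE.
Qed.

Lemma im_in (g : col) u : g u \in im g.
Proof. by apply/imP; exists u. Qed.

Lemma card_im g : proper g -> #|im g| = n.
Proof. by move=> Hg; rewrite /im card_imset ?cardsT ?card_ord //; apply: proper_inj. Qed.

Lemma step_upd g v c : proper g -> c \in L v -> c \notin im g ->
  proper (upd g v c) /\ step g (upd g v c).
Proof.
move=> Hg Hc Hn.
have Hne u : g u != c by apply: contraNneq Hn => <-; apply: im_in.
have Hp : proper (upd g v c).
  split=> [x|x y]; rewrite !updE.
    by case: eqP => [->|_] //; case: Hg.
  rewrite /complete_adj => Hxy.
  have [xv|xv] := eqVneq x v; have [yv|yv] := eqVneq y v.
  - by subst; rewrite eqxx in Hxy.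
  - by rewrite eq_sym Hne.
  - by rewrite Hne.
  - by case: Hg => _; apply.
split=> //; split=> //.
  by apply/eqP => /ffunP /(_ v); rewrite updE eqxx => E; move: (Hne v); rewrite E eqxx.
by exists v => u /negbTE uv; rewrite updE uv.
Qed.

Lemma walk_cat k1 k2 a b c : walk k1 a b -> walk k2 b c -> walk (k1 + k2) a c.
Proof.
elim: k1 a => [|k IH] a /= ; first by move=> ->.
by case=> d [Hs Hw] H2; exists d; split => //; apply: IH.
Qed.

Lemma walk1 a b : step a b -> walk 1 a b.
Proof. by move=> H; exists b. Qed.

Lemma card_lt1 (T0 : finType) (A B : {set T0}) x : x \in A ->
  (forall y, y \in B -> (y \in A) && (y != x)) -> #|B| < #|A|.
Proof.
move=> xA H; rewrite (cardsD1 x A) xA add1n ltnS; apply: subset_leq_card.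
by apply/subsetP => y /H /andP[yA yx]; rewrite !inE yx.
Qed.

Lemma card_lt2 (T0 : finType) (A B : {set T0}) x y : x \in A -> y \in A -> x != y ->
  (forall z, z \in B -> [&& z \in A, z != x & z != y]) -> #|B| + 2 <= #|A|.
Proof.
move=> xA yA xy H; rewrite (cardsD1 x A) xA (cardsD1 y (A :\ x)) !inE yA eq_sym xy /=.
rewrite addnC add1n add1n !ltnS; apply: subset_leq_card.
by apply/subsetP => z /H /and3P[zA zx zy]; rewrite !inE zA zx zy.
Qed.


Lemma factsA b g v : proper g -> proper b -> g v != b v -> b v \notin im g ->
  [/\ proper (upd g v (b v)), step g (upd g v (b v)),
      forall y, upd g v (b v) y != b y -> (g y != b y) && (y != v) &
      forall y, upd g v (b v) y != b y -> b y \in im (upd g v (b v)) -> b y \in im g].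
Proof.
move=> Hg Hb Hv Hn.
have [Hp Hs] := step_upd Hg (proj1 Hb v) Hn.
split=> // y; rewrite updE.
  have [->|yv] := eqVneq y v; first by rewrite eqxx.
  by move=> ->.
have [->|yv] := eqVneq y v; first by rewrite eqxx.
move=> Hy /imP[u]; rewrite updE.
case: (eqVneq u v) => [_|uv] E; last by rewrite E im_in.
by move: (proper_inj Hb E) yv => ->; rewrite eqxx.
Qed.

Lemma factsBA b g v c p : proper g -> proper b -> g v != b v -> c \in L v ->
  c \notin im g -> b p = g v -> b p != c ->
  [/\ proper (upd (upd g v c) p (b p)), walk 2 g (upd (upd g v c) p (b p)), p != v,
      forall y, upd (upd g v c) p (b p) y != b y -> (g y != b y) && (y != p) &
      forall y, b y != c -> upd (upd g v c) p (b p) y != b y ->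
        b y \in im (upd (upd g v c) p (b p)) -> (b y \in im g) && (b y != g p)].
Proof.
move=> Hg Hb Hv Hc Hn Ep Hpc.
have pv : p != v by apply: contraNneq Hv => E; rewrite -Ep E.
have [Hg1 Hs1] := step_upd Hg Hc Hn.
have Hn1 : b p \notin im (upd g v c).
  apply/imP => -[u]; rewrite updE; case: (eqVneq u v) => [_|uv] E.
    by move: Hpc; rewrite E eqxx.
  by move: uv; rewrite (proper_inj Hg (etrans (esym Ep) E)) eqxx.
have [Hg2 Hs2] := step_upd Hg1 (proj1 Hb p) Hn1.
have gE y : upd (upd g v c) p (b p) y = if y == p then b p else if y == v then c else g y.
  by rewrite !updE.
split=> //.
- by simpl; exists (upd g v c); split; [exact: Hs1 | exact: walk1 Hs2].
- move=> y; rewrite gE; have [->|yp] := eqVneq y p; rewrite ?eqxx //=.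
  by case: ifP => [/eqP ->|_]; rewrite ?Hv ?andbT.
- move=> y Hyc; rewrite gE; have [->|yp] := eqVneq y p; rewrite ?eqxx //= => Hy.
  case/imP=> u; rewrite gE; case: (eqVneq u p) => [_|up] E.
    by move: yp; rewrite (proper_inj Hb E) eqxx.
  move: E; case: (eqVneq u v) => [_|uv] E; first by move: Hyc; rewrite E eqxx.
  rewrite E im_in /=; apply/negP => /eqP /(proper_inj Hg) E2; by rewrite E2 eqxx in up.
Qed.

Definition D0 (w : T) (b g : col) := [set x | (x != w) && (g x != b x)].
Definition U0 (w : T) (b g : col) := [set x | (x != w) && (g x != b x) && (b x \in im g)].
Definition Dm (b g : col) := [set x | g x != b x].
Definition Um (b g : col) := [set x | (g x != b x) && (b x \in im g)].


Lemma g2E (g : col) v c p (pc : C) y :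
  upd (upd g v c) p pc y = if y == p then pc else if y == v then c else g y.
Proof. by rewrite !updE. Qed.

Lemma S_done b g w : proper b -> proper g -> g w \notin im b ->
  (forall x, x != w -> g x = b x) -> walk 1 g b.
Proof.
move=> Hb Hg H2 H.
have Hn : b w \notin im g.
  apply/imP => -[u E]; case: (boolP (u == w)) => [/eqP uw|uw].
    by move: H2; rewrite -uw -E im_in.
  have E2 := proper_inj Hb (etrans E (H u uw)).
  by move: uw; rewrite -E2 eqxx.
have [_ Hs] := step_upd Hg (proj1 Hb w) Hn.
apply: walk1; suff -> : b = upd g w (b w) by [].
apply/ffunP => x; rewrite updE; case: (eqVneq x w) => [->|xw] //.
by rewrite H.
Qed.

Lemma Slem b w : proper b -> forall m g, proper g -> g w \notin im b ->
  (forall x, x != w -> g x \in im b) ->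
  (forall x, x != w -> g x != b x -> im b \subset L x) ->
  2 * #|D0 w b g| + #|U0 w b g| <= m ->
  exists2 k, 2 * k <= 2 * #|D0 w b g| + #|U0 w b g| + 2
           & walk k g b.
Proof.
move=> Hb m; elim: m => [|m IH] g Hg H2 H3 H4 Hm.
  exists 1; first by rewrite leq_addl.
  apply: (S_done (w:=w)) => // x xw; apply/eqP; apply: contraTT Hm => Hx.
  rewrite -ltnNge (cardsD1 x) inE xw Hx /=; by rewrite add1n mulnS.
case: (set_0Vmem (D0 w b g)) => [D0e | [x xD]].
  exists 1; first by rewrite leq_addl.
  apply: (S_done (w:=w)) => // y yw; apply/eqP; apply: contraTT isT => Hy.
  have : y \in D0 w b g by rewrite inE yw Hy.
  by rewrite D0e inE.
have xw : x != w by move: xD; rewrite inE => /andP[].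
have xD' : g x != b x by move: xD; rewrite inE => /andP[].
case: (pickP (fun y => (y \in D0 w b g) && (b y \notin im g))) => [y /andP[yD yn] | stuck].
  have yw : y != w by move: yD; rewrite inE => /andP[].
  have yD' : g y != b y by move: yD; rewrite inE => /andP[].
  have [Hg' Hs F1 F2] := factsA Hg Hb yD' yn.
  have cD : forall z, z \in D0 w b (upd g y (b y)) -> (z \in D0 w b g) && (z != y).
    move=> z; rewrite !inE => /andP[zw /F1 /andP[-> ->]]; by rewrite zw.
  have cU : U0 w b (upd g y (b y)) \subset U0 w b g.
    apply/subsetP => z; rewrite !inE => /andP[/andP[zw zD] zI].
    by move: (F1 z zD) => /andP[-> _]; rewrite zw (F2 z zD zI).
  have l1 := card_lt1 yD cD; have l2 := subset_leq_card cU.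
  have h2 : upd g y (b y) w \notin im b.
    by rewrite updE eq_sym (negbTE yw).
  have h3 : forall z, z != w -> upd g y (b y) z \in im b.
    move=> z zw; rewrite updE; case: ifP => _; [exact: im_in | exact: H3].
  have h4 : forall z, z != w -> upd g y (b y) z != b z -> im b \subset L z.
    by move=> z zw /F1 /andP[zD _]; apply: H4.
  have hm : 2 * #|D0 w b (upd g y (b y))| + #|U0 w b (upd g y (b y))| <= m.
    exact: ar1 l1 l2 Hm.
  have [k Hk Hw] := IH (upd g y (b y)) Hg' h2 h3 h4 hm.
  exists k.+1; first exact: ar3 Hk l1 l2.
  by exists (upd g y (b y)); split.
have Hst : forall y, y != w -> g y != b y -> b y \in im g.
  move=> y yw yD; move: (stuck y); rewrite inE yw yD /=; by move/negbT; rewrite negbK.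
have Hbw : b w \notin im g.
  apply/negP => bwI.
  have sub : im b \subset im g.
    apply/subsetP => c /imP[y ->]; case: (boolP (y == w)) => [/eqP -> //|yw].
    case: (boolP (g y == b y)) => [/eqP <-|yD]; [exact: im_in | exact: Hst].
  have : im b == im g.
    rewrite eqEcard sub (card_im Hg) (card_im Hb). by rewrite leqnn.
  by move/eqP => E; move: H2; rewrite E im_in.
have cL : b w \in L x by move: (H4 x xw xD') => /subsetP; apply; apply: im_in.
have [p Ep] : exists p, g x = b p by apply/imP; apply: H3.
have pc : b p != b w by apply: contraNneq Hbw => <-; rewrite -Ep im_in.
have [Hg2 Hw2 pv F1 F2] := factsBA Hg Hb xD' cL Hbw (esym Ep) pc.
have pw : p != w by apply: contraNneq Hbw => <-; rewrite -Ep im_in.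
have [q Eq] : exists q, g p = b q by apply/imP; apply: H3.
have gpD : g p != b p.
  apply/negP => /eqP E; have px : p = x by apply: (proper_inj Hg); rewrite E -Ep.
  by rewrite px eqxx in pv.
have pD : p \in D0 w b g by rewrite inE pw gpD.
have pU : p \in U0 w b g by rewrite inE pw gpD -Ep im_in.
have qw : q != w by apply: contraNneq Hbw => <-; rewrite -Eq im_in.
have gqD : g q != b q.
  apply/negP => /eqP E; have qp : q = p by apply: (proper_inj Hg); rewrite E -Eq.
  by move: gpD; rewrite -qp E eqxx.
have qU : q \in U0 w b g by rewrite inE qw gqD -Eq im_in.
have pq : p != q by apply: contraNneq gpD => pq; rewrite Eq -pq.
have cD : forall z, z \in D0 w b (upd (upd g x (b w)) p (b p)) -> (z \in D0 w b g) && (z != p).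
  move=> z; rewrite !inE => /andP[zw /F1 /andP[-> ->]]; by rewrite zw.
have cU : forall z, z \in U0 w b (upd (upd g x (b w)) p (b p)) ->
    [&& z \in U0 w b g, z != p & z != q].
  move=> z; rewrite !inE => /andP[/andP[zw zD] zI].
  have bzc : b z != b w by apply: contra_neq zw => /(proper_inj Hb).
  move: (F1 z zD) => /andP[-> zp]; move: (F2 z bzc zD zI) => /andP[-> zq].
  rewrite zw zp /=; apply: contra_neq zq => ->; by rewrite Eq.
have l1 := card_lt1 pD cD; have l2 := card_lt2 pU qU pq cU.
have wp : (w == p) = false by rewrite eq_sym (negbTE pw).
have wx : (w == x) = false by rewrite eq_sym (negbTE xw).
have h2 : upd (upd g x (b w)) p (b p) w \notin im b by rewrite g2E wp wx.
have h3 : forall z, z != w -> upd (upd g x (b w)) p (b p) z \in im b.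
  move=> z zw; rewrite g2E; case: ifP => _; first exact: im_in.
  case: ifP => _; [exact: im_in | exact: H3].
have h4 : forall z, z != w -> upd (upd g x (b w)) p (b p) z != b z -> im b \subset L z.
  by move=> z zw /F1 /andP[zD _]; apply: H4.
have hm : 2 * #|D0 w b (upd (upd g x (b w)) p (b p))| + #|U0 w b (upd (upd g x (b w)) p (b p))| <= m.
  exact: ar2 l1 l2 Hm.
have [k Hk Hw] := IH _ Hg2 h2 h3 h4 hm.
exists k.+2; first exact: ar4 Hk l1 l2.
exact: (walk_cat Hw2 Hw).
Qed.


Lemma Mlem b : proper b -> (forall v, n <= #|L v|) -> n < #|\bigcup_(v : T) L v| ->
  forall m g, proper g -> 2 * #|Dm b g| + #|Um b g| <= m ->
  exists2 k, 2 * k <= 2 * #|Dm b g| + #|Um b g| + 4 & walk k g b.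
Proof.
move=> Hb HL HU m; elim: m => [|m IH] g Hg Hm;
  (case: (set_0Vmem (Dm b g)) => [De | [x xD]];
  [ exists 0 => //; apply/ffunP => y; apply/eqP; apply: contraTT isT => Hy;
    have : y \in Dm b g by rewrite inE Hy
  | ]).
- by rewrite De inE.
- by move: Hm; rewrite (cardsD1 x) xD add1n mulnS.
- by rewrite De inE.
have xD' : g x != b x by move: xD; rewrite inE.
case: (pickP (fun y => (y \in Dm b g) && (b y \notin im g))) => [y /andP[yD yn] | stuck].
  have yD' : g y != b y by move: yD; rewrite inE.
  have [Hg' Hs F1 F2] := factsA Hg Hb yD' yn.
  have cD : forall z, z \in Dm b (upd g y (b y)) -> (z \in Dm b g) && (z != y).
    move=> z; rewrite !inE => /F1 /andP[-> ->] //.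
  have cU : Um b (upd g y (b y)) \subset Um b g.
    apply/subsetP => z; rewrite !inE => /andP[zD zI].
    by move: (F1 z zD) => /andP[-> _]; rewrite (F2 z zD zI).
  have l1 := card_lt1 yD cD; have l2 := subset_leq_card cU.
  have hm : 2 * #|Dm b (upd g y (b y))| + #|Um b (upd g y (b y))| <= m.
    exact: ar1 l1 l2 Hm.
  have [k Hk Hw] := IH (upd g y (b y)) Hg' hm.
  exists k.+1; first exact: ar3e Hk l1 l2.
  by exists (upd g y (b y)); split.
have Hst : forall y, g y != b y -> b y \in im g.
  move=> y yD; move: (stuck y); rewrite inE yD /=; by move/negbT; rewrite negbK.
have imE : im b = im g.
  apply/eqP; rewrite eqEcard (card_im Hg) (card_im Hb) leqnn andbT.
  apply/subsetP => c /imP[y ->].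
  case: (boolP (g y == b y)) => [/eqP <-|yD]; [exact: im_in | exact: Hst].
case: (boolP [exists v, [exists c, [&& v \in Dm b g, c \in L v & c \notin im g]]]).
  case/existsP => v /existsP[c /and3P[vD cL cn]].
  have vD' : g v != b v by move: vD; rewrite inE.
  have [p Ep] : exists p, g v = b p by apply/imP; rewrite imE im_in.
  have pc : b p != c by apply: contraNneq cn => <-; rewrite -imE im_in.
  have [Hg2 Hw2 pv F1 F2] := factsBA Hg Hb vD' cL cn (esym Ep) pc.
  have [q Eq] : exists q, g p = b q by apply/imP; rewrite imE im_in.
  have gpD : g p != b p.
    apply/negP => /eqP E; have px : p = v by apply: (proper_inj Hg); rewrite E -Ep.
    by rewrite px eqxx in pv.
  have pD : p \in Dm b g by rewrite inE gpD.
  have pU : p \in Um b g by rewrite inE gpD -Ep im_in.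
  have gqD : g q != b q.
    apply/negP => /eqP E; have qp : q = p by apply: (proper_inj Hg); rewrite E -Eq.
    by move: gpD; rewrite -qp E eqxx.
  have qU : q \in Um b g by rewrite inE gqD -Eq im_in.
  have pq : p != q by apply: contraNneq gpD => pq; rewrite Eq -pq.
  have cD : forall z, z \in Dm b (upd (upd g v c) p (b p)) -> (z \in Dm b g) && (z != p).
    move=> z; rewrite !inE => /F1 /andP[-> ->] //.
  have cU : forall z, z \in Um b (upd (upd g v c) p (b p)) ->
      [&& z \in Um b g, z != p & z != q].
    move=> z; rewrite !inE => /andP[zD zI].
    have bzc : b z != c by apply: contraNneq cn => <-; rewrite -imE im_in.
    move: (F1 z zD) => /andP[-> zp]; move: (F2 z bzc zD zI) => /andP[-> zq].
    rewrite zp /=; apply: contra_neq zq => ->; by rewrite Eq.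
  have l1 := card_lt1 pD cD; have l2 := card_lt2 pU qU pq cU.
  have hm : 2 * #|Dm b (upd (upd g v c) p (b p))| + #|Um b (upd (upd g v c) p (b p))| <= m.
    exact: ar2 l1 l2 Hm.
  have [k Hk Hw] := IH _ Hg2 hm.
  exists k.+2; first exact: ar4e Hk l1 l2.
  exact: (walk_cat Hw2 Hw).
move=> bad.
have badL : forall v c, g v != b v -> c \in L v -> c \in im g.
  move=> v c vD cL; apply: contraNT bad => cn; apply/existsP; exists v; apply/existsP; exists c.
  by rewrite inE vD cL cn.
have [c cUn cn] : exists2 c, c \in \bigcup_(v : T) L v & c \notin im g.
  case: (pickP (fun c => (c \in \bigcup_(v : T) L v) && (c \notin im g))) => [c /andP[]|none].
    by exists c.
  have sub : \bigcup_(v : T) L v \subset im g.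
    apply/subsetP => c cI; move: (none c); rewrite cI /= => /negbT; by rewrite negbK.
  by move: (subset_leq_card sub); rewrite (card_im Hg) leqNgt HU.
case/bigcupP: cUn => w _ cLw.
have wD : g w = b w by apply/eqP; apply: contraNT cn => wD; exact: badL wD cLw.
have [Hg1 Hs1] := step_upd Hg cLw cn.
have S2 : upd g w c w \notin im b by rewrite updE eqxx imE.
have S3 : forall z, z != w -> upd g w c z \in im b.
  by move=> z zw; rewrite updE (negbTE zw) imE im_in.
have S4 : forall z, z != w -> upd g w c z != b z -> im b \subset L z.
  move=> z zw; rewrite updE (negbTE zw) => zD.
  have : L z == im g.
    rewrite eqEcard (card_im Hg) HL andbT.
    by apply/subsetP => c' /(badL _ _ zD).
  by move/eqP => ->; rewrite imE.
have l1 : D0 w b (upd g w c) \subset Dm b g.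
  by apply/subsetP => z; rewrite !inE updE => /andP[zw]; rewrite (negbTE zw).
have l2 : U0 w b (upd g w c) \subset Um b g.
  apply/subsetP => z; rewrite !inE updE => /andP[/andP[zw]]; rewrite (negbTE zw) => zD _.
  by rewrite zD Hst.
have [k Hk Hw] := Slem Hb Hg1 S2 S3 S4 (leqnn _).
exists (1 + k); first exact: ar5 Hk (subset_leq_card l1) (subset_leq_card l2).
exact: (walk_cat (walk1 Hs1) Hw).
Qed.

End Aux.

Unset Implicit Arguments.
Set Strict Implicit.

Theorem mainTheorem17 (C : finType) (n : nat) (L : 'I_n -> {set C}) :
  2 <= n ->
  (forall v : 'I_n, n <= #|L v|) ->
  (#|\bigcup_(v : 'I_n) L v| = n ->
     (forall u v : 'I_n, L u = L v) /\
     (forall phi : {ffun 'I_n -> C},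
        is_Lcolouring (@complete_adj n) L phi -> frozen (@complete_adj n) L phi)) /\
  (#|\bigcup_(v : 'I_n) L v| <> n ->
     forall alpha beta : {ffun 'I_n -> C},
       is_Lcolouring (@complete_adj n) L alpha ->
       is_Lcolouring (@complete_adj n) L beta ->
       recol_equiv (@complete_adj n) L alpha beta /\
       (* dist <= 3n/2 + 2, i.e. 2*dist <= 3n + 4 *)
       exists2 d, 2 * d <= 3 * n + 4 & recol_dist_le (@complete_adj n) L alpha beta d).
Proof.
move=> n2 HL.
have LU v : L v \subset \bigcup_(u : 'I_n) L u by apply: (bigcup_sup v).
split.
  move=> HU.
  have LE v : L v = \bigcup_(u : 'I_n) L u.
    by apply/eqP; rewrite eqEcard LU HU HL.
  split; first by move=> u v; rewrite !LE.
  move=> phi Hphi v c; rewrite !inE => /andP[cv cL].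
  have E : im phi == L v.
    rewrite eqEcard (card_im Hphi) LE HU leqnn andbT.
    apply/subsetP => d /imP[u ->]; rewrite -(LE u); exact: (proj1 Hphi u).
  move: cL; rewrite -(eqP E) => /imP[u Eu]; exists u => //.
  rewrite /complete_adj; apply: contra_neq cv => ->; by rewrite Eu.
move=> HU alpha beta Ha Hb.
have v0 : 'I_n by exists 0; lia.
have HU' : n < #|\bigcup_(u : 'I_n) L u|.
  by rewrite ltn_neqAle eq_sym; apply/andP; split; [apply/eqP | exact: leq_trans (HL v0) (subset_leq_card (LU v0))].
have [k Hk Hw] := Mlem Hb HL HU' Ha (leqnn _).
split; first by exists k.
exists k; last by exists k.
apply: (leq_trans Hk).
have c1 : #|Dm beta alpha| <= n by apply: leq_trans (max_card _) _; rewrite card_ord.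
have c2 : #|Um beta alpha| <= n by apply: leq_trans (max_card _) _; rewrite card_ord.
exact: ar6 c1 c2.
Qed.
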